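(* Let $F$ be a totally real abelian number field, let $r\ge1$ and let $d_{1},\dots,d_{r},d$ be odd square-free positive integers such that $K=F(\sqrt{d_{1}},\dots,\sqrt{d_{r}},\sqrt{-d})$ satisfies $[K:F]=2^{r+1}$ and $\sqrt{2}\notin K$. Let $G_r=\langle\tau\rangle$ be the group of order $2$ acting on $E_{K_\infty}$ and on $E_{K_\infty^+}$ as described in the context. If $W_{K_{\infty}}(2)=\{\pm1\}$ and $(E_{K_{\infty}}:E_{K_{\infty}^{+}}W_{K_{\infty}})=1$, then $H^{i}(G_{r},E_{K_{\infty}})\cong H^{i}(G_{r},E_{K_{\infty}^{+}})$ for $i=1$ and $i=2$.
   Context: $K_\infty=\bigcup_n K_n$ is the cyclotomic $\mathbb{Z}_2$-extension of $K$, $K_\infty^{+}$ its maximal real subfield (the cyclotomic $\mathbb{Z}_2$-extension of $K^+=F(\sqrt{d_1},\dots,\sqrt{d_r})$); $E_{K_\infty}$, $E_{K_\infty^+}$ are the unit groups (unions of the unit groups of the layers), $W_{K_\infty}$ is the group of roots of unity of $K_\infty$ and $W_{K_\infty}(2)$ its Sylow $2$-subgroup. Put $K^{(r-1)}=F(\sqrt{d_1},\dots,\sqrt{d_{r-1}})$, $t_r=d_rd$, and let $K^{(r-1)}_\infty$ be the cyclotomic $\mathbb{Z}_2$-extension of $K^{(r-1)}$. $G_r=\mathrm{Gal}(F(\sqrt{d_1},\dots,\sqrt{d_r})/K^{(r-1)})$, identified with $\mathrm{Gal}(K_\infty/K^{(r-1)}_\infty(\sqrt{-t_r}))$ (whose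 generator $\tau$ restricts to the generator of $\mathrm{Gal}(K^+_\infty/K^{(r-1)}_\infty)$); it acts on $E_{K_\infty}$ and $E_{K_\infty^+}$ by Galois action. $H^i$ denotes (Tate) cohomology of the cyclic group $G_r$. *)

(* Defs.v *)
(* number fields are modelled as subfields of algC,
   the algebraic closure of Q (algebraic complex numbers). *)
From mathcomp Require Import all_boot all_order all_algebra all_field.
Set Implicit Arguments. Unset Strict Implicit. Unset Printing Implicit Defensive.
Import Order.TTheory GRing.Theory Num.Theory.
Local Open Scope ring_scope.

Definition is_subfield (P : algC -> Prop) : Prop :=
  [/\ P 0, P 1,
      (forall x y, P x -> P y -> P (x - y)),
      (forall x y, P x -> P y -> P (x * y)) &
      (forall x, P x -> x != 0 -> P x^-1)].

Definition genF (P S : algC -> Prop) : algC -> Prop :=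
  fun x => forall Q, is_subfield Q -> (forall y, P y -> Q y) ->
                     (forall y, S y -> Q y) -> Q x.

Definition Qfield : algC -> Prop := fun x => x \in Crat.

Definition is_basis (P L : algC -> Prop) (s : seq algC) : Prop :=
  [/\ (forall v, v \in s -> L v),
      (forall x, L x -> exists c : seq algC,
          size c = size s /\ (forall a, a \in c -> P a) /\
          x = \sum_(i < size s) c`_i * s`_i) &
      (forall c : seq algC, size c = size s -> (forall a, a \in c -> P a) ->
          \sum_(i < size s) c`_i * s`_i = 0 -> forall i, c`_i = 0)].

Definition ext_degree (P L : algC -> Prop) (n : nat) : Prop :=
  exists s : seq algC, size s = n /\ is_basis P L s.

Definition number_field (F : algC -> Prop) : Prop :=
  is_subfield F /\ exists n, ext_degree Qfield F n.

(* every embedding of F into C (= restriction of an automorphism of algC)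
   lands in the reals *)
Definition totally_real (F : algC -> Prop) : Prop :=
  forall (s : {rmorphism algC -> algC}) x, F x -> s x \is Num.real.

(* F/Q is Galois (normal) with abelian Galois group *)
Definition abelian_field (F : algC -> Prop) : Prop :=
  (forall (s : {rmorphism algC -> algC}) x, F x -> F (s x)) /\
  (forall (s t : {rmorphism algC -> algC}) x, F x -> s (t x) = t (s x)).

Definition squarefree (n : nat) : Prop :=
  forall p, prime p -> ~~ (p * p %| n)%N.

(* the cyclotomic Z_2-extension Q_oo of Q: generated by the zeta + zeta^-1
   for zeta a 2-power root of unity *)
Definition Qcyc2 : algC -> Prop :=
  genF Qfield (fun y => exists z : algC, exists n, z ^+ (2 ^ n) = 1 /\ y = z + z^-1).

(* cyclotomic Z_2-extension of L : the compositum L.Q_oo *)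
Definition Z2cyc (L : algC -> Prop) : algC -> Prop := genF L Qcyc2.

Definition units_of (L : algC -> Prop) : algC -> Prop :=
  fun x => [/\ L x, x != 0, x \in Aint & x^-1 \in Aint].

Definition roots_of_unity (L : algC -> Prop) : algC -> Prop :=
  fun x => L x /\ exists n, (0 < n)%N /\ x ^+ n = 1.

Definition roots_of_unity2 (L : algC -> Prop) : algC -> Prop :=
  fun x => L x /\ exists n, x ^+ (2 ^ n) = 1.

(* A/B ~= A'/B' as abstract groups, where B <= A and B' <= A' are
   subgroups of the multiplicative group algC^x *)
Definition quot_iso (A B A' B' : algC -> Prop) : Prop :=
  exists f : algC -> algC,
    [/\ (forall x, A x -> A' (f x)),
        (forall x y, A x -> A y -> B' (f (x * y) / (f x * f y))),
        (forall x, A x -> (B' (f x) <-> B x)) &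
        (forall x', A' x' -> exists x, A x /\ B' (x' / f x))].

(* Tate cohomology of the cyclic group <s> of order 2 acting on a
   multiplicative module M:
   H^1 = {x | x * s x = 1} / {y / s y},   H^2 = hat-H^0 = M^s / {y * s y} *)
Definition Z1 (s : algC -> algC) (M : algC -> Prop) : algC -> Prop :=
  fun x => M x /\ x * s x = 1.
Definition B1 (s : algC -> algC) (M : algC -> Prop) : algC -> Prop :=
  fun x => exists y, M y /\ x = y / s y.
Definition Z2 (s : algC -> algC) (M : algC -> Prop) : algC -> Prop :=
  fun x => M x /\ s x = x.
Definition B2 (s : algC -> algC) (M : algC -> Prop) : algC -> Prop :=
  fun x => exists y, M y /\ x = y * s y.

Definition H_iso (i : nat) (s : algC -> algC) (M N : algC -> Prop) : Prop :=
  if i == 1%N then quot_iso (Z1 s M) (B1 s M) (Z1 s N) (B1 s N)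
  else quot_iso (Z2 s M) (B2 s M) (Z2 s N) (B2 s N).

(* Main.v *)
Require Import Defs.
From mathcomp Require Import all_boot all_order all_algebra all_field.
From Stdlib Require Import Classical ClassicalEpsilon.
From mathcomp Require Import ring zify.
Import Order.TTheory GRing.Theory Num.Theory.
Local Open Scope ring_scope.

Definition grp (P : algC -> Prop) :=
  [/\ P 1, (forall x y, P x -> P y -> P (x * y)) & (forall x, P x -> P x^-1)].

Lemma grpX P x n : grp P -> P x -> P (x ^+ n).
Proof. case=> P1 PM _ Px; elim: n => [|n IH]; first by rewrite expr0. by rewrite exprS; apply: PM. Qed.

Lemma odd_split (z : algC) k : odd k -> z ^+ k = z * (z ^+ 2) ^+ k./2.
Proof.
move=> ok; rewrite -exprM -exprS; congr (_ ^+ _).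
by rewrite -{1}(odd_double_half k) ok -muln2 mulnC.
Qed.

Lemma grp_odd P z k : grp P -> z != 0 -> P (z ^+ 2) -> P (z ^+ k) -> odd k -> P z.
Proof.
move=> gP nz P2 Pk ok; have [P1 PM PV] := gP.
have -> : z = z ^+ k * ((z ^+ 2) ^+ k./2)^-1.
  by rewrite odd_split // mulfK // expf_neq0 // expf_neq0.
by apply: PM => //; apply: PV; apply: grpX.
Qed.

Lemma abs_iso (A B A' B' : algC -> Prop) :
  grp A -> grp B -> grp A' -> grp B' ->
  (forall x, A x -> x != 0) ->
  (forall x, A' x -> A x) -> (forall x, B' x -> B x) ->
  (forall x, A x -> B (x ^+ 2)) ->
  (forall x, A x -> exists k, odd k /\ A' (x ^+ k)) ->
  (forall z, A' z -> B z -> B' z) ->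
  quot_iso A B A' B'.
Proof.
move=> gA gB gA' gB' nz A'A B'B sq od inj.
have H : forall x, exists k, A x -> odd k /\ A' (x ^+ k).
  move=> x; case: (classic (A x)) => Ax; last by exists 0%N.
  by have [k Hk] := od x Ax; exists k.
pose kf x := proj1_sig (constructive_indefinite_description _ (H x)).
have Hk x : A x -> odd (kf x) /\ A' (x ^+ kf x).
  exact: (proj2_sig (constructive_indefinite_description _ (H x))).
pose f x := x ^+ kf x.
have [A1 AM AV] := gA; have [B1 BM BV] := gB; have [Ap1 ApM ApV] := gA'.
have fA' x : A x -> A' (f x) by move=> Ax; case: (Hk x Ax).
have fnz x : A x -> f x != 0 by move=> Ax; apply: (nz); apply: (A'A); apply: fA'.
have bB x : A x -> B (f x / x).
  move=> Ax; have [ok _] := Hk x Ax.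
  rewrite /f odd_split // [x * _]mulrC mulfK ?nz //; exact: grpX (sq x Ax).
exists f; split.
- exact: fA'.
- move=> x y Ax Ay; have Axy := AM _ _ Ax Ay.
  apply: (inj).
    apply: (ApM); first exact: fA'.
    by apply: (ApV); apply: (ApM); apply: fA'.
  have -> : f (x * y) / (f x * f y) = (f (x * y) / (x * y)) / ((f x / x) * (f y / y)).
    have := nz _ Ax; have := nz _ Ay; have := fnz _ Ax; have := fnz _ Ay.
    move=> h1 h2 h3 h4.
    by field; rewrite ?h1 ?h2 ?h3 ?h4 ?mulf_neq0.
  by apply: (BM); [exact: (bB) | apply: (BV); apply: (BM); apply: (bB)].
- move=> x Ax; split.
    move=> Bf; have -> : x = f x / (f x / x) by rewrite invf_div mulrC divfK ?fnz.
    by apply: (BM); [exact: (B'B) | apply: (BV); exact: (bB)].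
  move=> Bx; apply: (inj); first exact: fA'.
  have -> : f x = x * (f x / x) by rewrite mulrC divfK ?nz.
  by apply: (BM) => //; exact: (bB).
- move=> x' A'x'; exists x'; split; first exact: (A'A).
  apply: (inj).
    by apply: (ApM) => //; apply: (ApV); apply: fA'; apply: (A'A).
  rewrite -invf_div; apply: (BV); apply: (bB); exact: (A'A).
Qed.

Lemma genF_sub P S : is_subfield (genF P S).
Proof.
split.
- by move=> Q [] .
- by move=> Q [].
- by move=> x y Hx Hy Q HQ HP HS; case: (HQ) => _ _ HB _ _; apply: HB; [apply: Hx|apply: Hy].
- by move=> x y Hx Hy Q HQ HP HS; case: (HQ) => _ _ _ HM _; apply: HM; [apply: Hx|apply: Hy].
- by move=> x Hx nx Q HQ HP HS; case: (HQ) => _ _ _ _ HV; apply: HV => //; apply: Hx.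
Qed.

Lemma subfieldX L x n : is_subfield L -> L x -> L (x ^+ n).
Proof.
case=> _ L1 _ LM _ Lx; elim: n => [|n IH]; first by rewrite expr0.
by rewrite exprS; apply: LM.
Qed.

Lemma units_grp L : is_subfield L -> grp (units_of L).
Proof.
case=> L0 L1 LB LM LV; split.
- by split => //; rewrite ?oner_eq0 ?invr1 ?Aint1.
- move=> x y [Lx nx ax bx] [Ly ny ay By]; split.
  + exact: LM.
  + exact: mulf_neq0.
  + exact: rpredM.
  + by rewrite invfM; apply: rpredM.
- move=> x [Lx nx ax bx]; split => //.
  + exact: LV.
  + by rewrite invr_eq0.
  + by rewrite invrK.
Qed.

Lemma units_nz L x : units_of L x -> x != 0.
Proof. by case. Qed.

Section Coh.
Variable s : {rmorphism algC -> algC}.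
Variable N : algC -> Prop.
Hypothesis gN : grp N.

Lemma Z1_grp : grp (Z1 s N).
Proof.
have [N1 NM NV] := gN; split.
- by split => //; rewrite rmorph1 mulr1.
- move=> x y [Nx hx] [Ny hy]; split; first exact: NM.
  by rewrite rmorphM mulrACA hx hy mulr1.
- move=> x [Nx hx]; split; first exact: NV.
  by rewrite fmorphV -invfM hx invr1.
Qed.

Lemma B1_grp : grp (B1 s N).
Proof.
have [N1 NM NV] := gN; split.
- by exists 1; rewrite rmorph1 invr1 mulr1.
- move=> _ _ [x [Nx ->]] [y [Ny ->]]; exists (x * y); split; first exact: NM.
  by rewrite rmorphM invfM mulrACA.
- move=> _ [x [Nx ->]]; exists x^-1; split; first exact: NV.
  by rewrite fmorphV invf_div invrK mulrC.
Qed.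

Lemma Z2_grp : grp (Z2 s N).
Proof.
have [N1 NM NV] := gN; split.
- by split => //; rewrite rmorph1.
- move=> x y [Nx hx] [Ny hy]; split; first exact: NM.
  by rewrite rmorphM hx hy.
- move=> x [Nx hx]; split; first exact: NV.
  by rewrite fmorphV hx.
Qed.

Lemma B2_grp : grp (B2 s N).
Proof.
have [N1 NM NV] := gN; split.
- by exists 1; rewrite rmorph1 mulr1.
- move=> _ _ [x [Nx ->]] [y [Ny ->]]; exists (x * y); split; first exact: NM.
  by rewrite rmorphM mulrACA.
- move=> _ [x [Nx ->]]; exists x^-1; split; first exact: NV.
  by rewrite fmorphV invfM.
Qed.

Lemma sq1 x : N x -> x != 0 -> x * s x = 1 -> B1 s N (x ^+ 2).
Proof.
move=> Nx nx h; exists x; split => //.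
have -> : s x = x^-1 by apply: (mulfI nx); rewrite h divff.
by rewrite invrK expr2.
Qed.

Lemma sq2 x : N x -> s x = x -> B2 s N (x ^+ 2).
Proof. by move=> Nx h; exists x; split => //; rewrite h expr2. Qed.

End Coh.

Lemma odd_dec n : (0 < n)%N -> exists a m, odd m /\ n = (2 ^ a * m)%N.
Proof.
elim: n {-2}n (leqnn n) => [|N IH] n le0 npos.
  by move: npos; rewrite lt0n -leqn0 le0.
case on: (odd n); first by exists 0%N, n; rewrite expn0 mul1n.
have e : n = (n./2).*2 by rewrite -{1}(odd_double_half n) on add0n.
move: e; set h := n./2 => e; rewrite -muln2 in e.
have H1 : (h <= N)%N by lia.
have H2 : (0 < h)%N by lia.
have [a [m [om em]]] := IH h H1 H2.
exists a.+1, m; split => //.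
by rewrite e em expnS; lia.
Qed.
Arguments grp_odd [P z k].
Arguments Z1_grp [s N].
Arguments B1_grp [s N].
Arguments Z2_grp [s N].
Arguments B2_grp [s N].
Arguments units_grp [L].
Arguments units_nz [L x].

Theorem proposition3p6
  (F : algC -> Prop) (r : nat) (ds : nat -> nat) (d : nat)
  (tau : {rmorphism algC -> algC}) :
  number_field F -> totally_real F -> abelian_field F ->
  (1 <= r)%N ->
  (forall i, (1 <= i <= r)%N -> [/\ odd (ds i), squarefree (ds i) & (0 < ds i)%N]) ->
  odd d -> squarefree d -> (0 < d)%N ->
  let K := genF F (fun y => (exists2 i, (1 <= i <= r)%N & y = sqrtC (ds i)%:R)
                            \/ y = sqrtC (- d%:R)) in
  let Kp := genF F (fun y => exists2 i, (1 <= i <= r)%N & y = sqrtC (ds i)%:R) in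
  let Kr1 := genF F (fun y => exists2 i, (1 <= i <= r.-1)%N & y = sqrtC (ds i)%:R) in
  let tr := (ds r * d)%N in
  let Kinf := Z2cyc K in
  let Kpinf := Z2cyc Kp in
  ext_degree F K (2 ^ r.+1) ->
  ~ K (sqrtC 2) ->
  (* tau generates G_r = Gal(K_oo / K^(r-1)_oo(sqrt(-t_r))) *)
  (forall x, genF (Z2cyc Kr1) (fun y => y = sqrtC (- tr%:R)) x -> tau x = x) ->
  (exists x, Kinf x /\ tau x != x) ->
  (* W_{K_oo}(2) = {+-1} *)
  (forall x, roots_of_unity2 Kinf x <-> x = 1 \/ x = -1) ->
  (* (E_{K_oo} : E_{K_oo^+} W_{K_oo}) = 1 *)
  (forall x, units_of Kinf x ->
     exists u w, units_of Kpinf u /\ roots_of_unity Kinf w /\ x = u * w) ->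
  H_iso 1 tau (units_of Kinf) (units_of Kpinf) /\
  H_iso 2 tau (units_of Kinf) (units_of Kpinf).
Proof.
move=> nF tF aF r1 hds od sqd dpos K Kp Kr1 tr Kinf Kpinf deg ns2 htau hmove hW hdec.
have sK : is_subfield Kinf := genF_sub _ _.
have sKp : is_subfield Kpinf := genF_sub _ _.
have KpK : forall x, Kpinf x -> Kinf x.
  move=> x Hx Q HQ HK HC; apply: Hx => // y Hy; apply: HK => Q' HQ' HF HS.
  apply: Hy => // z [i hi ->]; apply: HS; left; by exists i.
have EpE : forall x, units_of Kpinf x -> units_of Kinf x.
  by move=> x [? ? ? ?]; split => //; apply: KpK.
have gE := units_grp sK; have gEp := units_grp sKp.
have Em1 : units_of Kpinf (-1).
  case: (sKp) => L0 L1 LB _ _; split.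
  - by rewrite -sub0r; apply: LB.
  - by rewrite oppr_eq0 oner_eq0.
  - by rewrite rpredN Aint1.
  - by rewrite invrN1 rpredN Aint1.
have keyE : forall y, units_of Kinf y -> exists k, odd k /\ units_of Kpinf (y ^+ k).
  move=> y Ey; have [u [w [Eu [[Kw [n [n0 wn]]] ->]]]] := hdec y Ey.
  have [a [m [om em]]] := odd_dec _ n0.
  have : roots_of_unity2 Kinf (w ^+ m).
    split; first exact: (subfieldX _ _ _ sK Kw).
    by exists a; rewrite -exprM mulnC -em.
  move/hW => hwm; exists m; split => //.
  rewrite exprMn; have [E1 EM _] := gEp; apply: EM; first exact: grpX.
  by case: hwm => ->.
split.
- rewrite /H_iso /=; apply: abs_iso.
  + exact: Z1_grp.
  + exact: B1_grp.
  + exact: Z1_grp.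
  + exact: B1_grp.
  + by move=> x [[_ nx _ _] _].
  + by move=> x [Ex h]; split => //; apply: EpE.
  + by move=> _ [y [Ey ->]]; exists y; split => //; apply: EpE.
  + by move=> x [Ex h]; apply: sq1 => //; apply: (units_nz Ex).
  + move=> x [Ex h]; have [k [ok Ek]] := keyE x Ex; exists k; split => //; split => //.
    by rewrite rmorphXn -exprMn h expr1n.
  + move=> z [Ez hz] [y [Ey ez]]; have [k [ok Ek]] := keyE y Ey.
    apply: (grp_odd (B1_grp gEp) (units_nz Ez)) ok.
      by apply: sq1 => //; apply: units_nz Ez.
    by exists (y ^+ k); split => //; rewrite ez exprMn exprVn rmorphXn.
- rewrite /H_iso /=; apply: abs_iso.
  + exact: Z2_grp.
  + exact: B2_grp.
  + exact: Z2_grp.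
  + exact: B2_grp.
  + by move=> x [[_ nx _ _] _].
  + by move=> x [Ex h]; split => //; apply: EpE.
  + by move=> _ [y [Ey ->]]; exists y; split => //; apply: EpE.
  + by move=> x [Ex h]; apply: sq2.
  + move=> x [Ex h]; have [k [ok Ek]] := keyE x Ex; exists k; split => //; split => //.
    by rewrite rmorphXn h.
  + move=> z [Ez hz] [y [Ey ez]]; have [k [ok Ek]] := keyE y Ey.
    apply: (grp_odd (B2_grp gEp) (units_nz Ez)) ok.
      by apply: sq2.
    by exists (y ^+ k); split => //; rewrite ez exprMn rmorphXn.
Qed.
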